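(* Let $\pi_1,\pi_2,\pi_3$ be patterns such that $(\pi_1,\pi_2)$ and $(\pi_2,\pi_3)$ are chainable. Then (1) $(\pi_1,\pi_2*\pi_3)$ and $(\pi_1*\pi_2,\pi_3)$ are chainable; (2) $r(\pi_1,\pi_2*\pi_3)=r(\pi_1,\pi_2)$ and $r(\pi_1*\pi_2,\pi_3)=r(\pi_2,\pi_3)$; (3) $\pi_1*(\pi_2*\pi_3)=(\pi_1*\pi_2)*\pi_3$.
   Context: A pattern is a tuple $\pi=(a,b,c,d)$ of positive integers. Two patterns $\pi=(a,b,c,d)$, $\pi'=(a',b',c',d')$ are chainable if $ac/a'=b'd'/d$, this common value (denoted $r(\pi,\pi')$) is an integer, $a\mid a'$ and $d'\mid d$. For a chainable pair, $\pi*\pi':=(a,\,bd/d',\,a'c'/a,\,d')$. *)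

(* Defs.v *)
From mathcomp Require Import all_boot all_order all_algebra.
Set Implicit Arguments. Unset Strict Implicit. Unset Printing Implicit Defensive.
Import Order.TTheory GRing.Theory Num.Theory.

Record pattern := Pattern { pa : nat; pb : nat; pc : nat; pd : nat }.

Definition is_pattern (p : pattern) : Prop :=
  (0 < pa p)%N /\ (0 < pb p)%N /\ (0 < pc p)%N /\ (0 < pd p)%N.

Definition r (p q : pattern) : rat :=
  ((pa p * pc p)%N%:R / (pa q)%:R)%R.

Definition chainable (p q : pattern) : Prop :=
  r p q = ((pb q * pd q)%N%:R / (pd p)%:R)%R /\
  r p q \is a Num.int /\
  (pa p %| pa q)%N /\ (pd q %| pd p)%N.

(* pi * pi' := (a, b d / d', a' c' / a, d')  (exact divisions when chainable) *)
Definition star (p q : pattern) : pattern :=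
  Pattern (pa p) (pb p * pd p %/ pd q) (pa q * pc q %/ pa p) (pd q).

(* Main.v *)
Require Import Defs.
From mathcomp Require Import all_boot all_order all_algebra.
Import Order.TTheory GRing.Theory Num.Theory.
Local Open Scope ring_scope.

Lemma chain_ext p q : is_pattern p -> is_pattern q -> chainable p q ->
  exists k, (pa p * pc p = k * pa q /\ pb q * pd q = k * pd p /\ (r p q = k%:R)%R)%N.
Proof.
move=> [a1 [b1 [c1 d1]]] [a2 [b2 [c2 d2]]] [E [I [D1 D2]]].
have r0 : (0 <= r p q)%R by rewrite /r divr_ge0 // ler0n.
move: I; rewrite (intrEge0 r0) => /natrP [k Hk].
exists k; split; last split; last by [].
- have := congr1 (fun x => x * (pa q)%:R)%R Hk.
  rewrite /r divfK ?pnatr_eq0 -?lt0n // -natrM => /eqP; rewrite eqr_nat => /eqP.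
  done.
- have := congr1 (fun x => x * (pd p)%:R)%R Hk.
  rewrite E divfK ?pnatr_eq0 -?lt0n // -natrM => /eqP; rewrite eqr_nat => /eqP.
  done.
Qed.

Lemma chain_mk p q k : (0 < pa q)%N -> (0 < pd p)%N ->
  (pa p * pc p = k * pa q)%N -> (pb q * pd q = k * pd p)%N ->
  (pa p %| pa q)%N -> (pd q %| pd p)%N -> chainable p q /\ (r p q = k%:R)%R.
Proof.
move=> a0 d0 H1 H2 D1 D2.
have Hr : r p q = k%:R by rewrite /r H1 natrM mulfK // pnatr_eq0 -lt0n.
split=> //; split; last split=> //.
- by rewrite Hr H2 natrM mulfK // pnatr_eq0 -lt0n.
- by rewrite Hr; apply: natr_int.
Qed.

Theorem lemma4p7 (p1 p2 p3 : pattern) :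
  is_pattern p1 -> is_pattern p2 -> is_pattern p3 ->
  chainable p1 p2 -> chainable p2 p3 ->
  [/\ chainable p1 (star p2 p3) /\ chainable (star p1 p2) p3,
      r p1 (star p2 p3) = r p1 p2 /\ r (star p1 p2) p3 = r p2 p3
    & star p1 (star p2 p3) = star (star p1 p2) p3].
Proof.
move=> P1 P2 P3 C12 C23.
have [k1 [E1 [F1 R1]]] := @chain_ext _ _ P1 P2 C12.
have [k2 [E2 [F2 R2]]] := @chain_ext _ _ P2 P3 C23.
move: C12 C23 => [_ [_ [A12 D12]]] [_ [_ [A23 D23]]].
case: P1 => a1 [b1 [c1 d1]]; case: P2 => a2 [b2 [c2 d2]]; case: P3 => a3 [b3 [c3 d3]].
have S1 : chainable p1 (star p2 p3) /\ (r p1 (star p2 p3) = k1%:R)%R.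
  apply: chain_mk => //=.
  - by rewrite divnK // dvdn_mull.
  - exact: dvdn_trans D23 D12.
have S2 : chainable (star p1 p2) p3 /\ (r (star p1 p2) p3 = k2%:R)%R.
  apply: chain_mk => //=.
  - by rewrite mulnC divnK // dvdn_mulr.
  - exact: dvdn_trans A12 A23.
case: S1 S2 => [S1 T1] [S2 T2].
split; [by [] | by rewrite T1 T2 R1 R2 |].
rewrite /star /=; congr Pattern.
- by rewrite divnK // dvdn_mull.
- by rewrite mulnC divnK // dvdn_mulr.
Qed.
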